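(* Let $\lambda$ be an infinite cardinal with $\lambda=\lambda^{<\lambda}$. Then $\mathfrak{b}_\lambda\le\mathfrak{b}^7_\lambda$. In other words: if $\mathcal{B},\mathcal{C}\subseteq[\lambda]^\lambda$, $|\mathcal{C}|\le\lambda$, $|\mathcal{B}|<\mathfrak{b}_\lambda$, and $|B\cap C|<\lambda$ for all $B\in\mathcal{B}$, $C\in\mathcal{C}$, then $\mathcal{B}$ and $\mathcal{C}$ are separable.
   Context: For sets $A,B$, $A\subseteq^* B$ means $|A\setminus B|<\lambda$. For families $\mathcal{B},\mathcal{C}$ of subsets of $\lambda$, write $\mathcal{B}\perp\mathcal{C}$ if $|B\cap C|<\lambda$ for all $B\in\mathcal{B}$, $C\in\mathcal{C}$. A set $S$ separates $\mathcal{B}$ and $\mathcal{C}$ if $B\subseteq^* S$ for every $B\in\mathcal{B}$ and $|C\cap S|<\lambda$ for every $C\in\mathcal{C}$; they are separable if such $S$ exists. $\mathfrak{b}^7_\lambda$ is the least cardinality of a family $\mathcal{B}\subseteq[\lambda]^\lambda$ for which there exists $\mathcal{C}\subseteq[\lambda]^\lambda$ with $|\mathcal{C}|=\lambda$, $\mathcal{B}\perp\mathcal{C}$, and $\mathcal{B},\mathcal{C}$ not separable. For $f,g\in{}^\lambda\lambda$, $f\le^* g$ means $|\{\alpha<\lambda: f(\alpha)>g(\alpha)\}|<\lambda$; $B\subseteq{}^\lambda\lambda$ is unbounded if no $h\in{}^\lambda\lambda$ satisfies $f\le^*h$ for all $f\in B$; $\mathfrak{b}_\lambda$ is the least cardinality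 of an unbounded family. *)

(* Defs.v *)
From Stdlib Require Import Classical Relations Wellfounded.

Definition card_le (A B : Type) : Prop :=
  exists f : A -> B, forall x y, f x = f y -> x = y.

Definition card_lt (A B : Type) : Prop := card_le A B /\ ~ card_le B A.

Section Lambda.
Variable L : Type.
Variable R : L -> L -> Prop.

(* the cardinal lambda: a strict well-order on L whose proper initial
   segments all have cardinality < |L|, i.e. L has order type the initial
   ordinal lambda = |L|. *)
Definition is_cardinal_order : Prop :=
  (forall x, ~ R x x) /\
  (forall x y z, R x y -> R y z -> R x z) /\
  (forall x y, R x y \/ x = y \/ R y x) /\
  well_founded R /\
  (forall x, card_lt {y : L | R y x} L).

Definition small (A : L -> Prop) : Prop := ~ card_le L {x : L | A x}.

Definition large (A : L -> Prop) : Prop := card_le L {x : L | A x}.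

Definition subset_star (A B : L -> Prop) : Prop :=
  small (fun x => A x /\ ~ B x).

Definition le_star (f g : L -> L) : Prop :=
  small (fun a => R (g a) (f a)).

Definition unbounded (F : (L -> L) -> Prop) : Prop :=
  ~ exists h : L -> L, forall f, F f -> le_star f h.

Definition separates (S : L -> Prop) (Bf Cf : (L -> Prop) -> Prop) : Prop :=
  (forall B, Bf B -> subset_star B S) /\
  (forall C, Cf C -> small (fun x => C x /\ S x)).

Definition separable (Bf Cf : (L -> Prop) -> Prop) : Prop :=
  exists S : L -> Prop, separates S Bf Cf.

End Lambda.

(* Main.v *)
Require Import Defs.
From Stdlib Require Import Classical Relations Wellfounded.
From Stdlib Require Import ClassicalEpsilon ProofIrrelevance.

Definition inj {A B} (f : A -> B) := forall x y, f x = f y -> x = y.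

Section H.
Variable L : Type.
Variable R : L -> L -> Prop.
Hypothesis Hc : is_cardinal_order L R.
Variable k : nat -> L.
Hypothesis kinj : inj k.
Hypothesis Hpow : forall P : L -> Prop, small L P -> card_le ({x : L | P x} -> L) L.

Definition sm (P : L -> Prop) := ~ exists f : L -> L, inj f /\ forall x, P (f x).

Lemma small_sm P : small L P <-> sm P.
Proof.
  unfold small, sm, card_le. split; intros H1 H2; apply H1.
  - destruct H2 as [f [fi fP]]. exists (fun x => exist _ (f x) (fP x)).
    intros x y E. apply fi. exact (f_equal (@proj1_sig _ _) E).
  - destruct H2 as [j ji]. exists (fun x => proj1_sig (j x)). split.
    + intros x y E. apply ji. destruct (j x), (j y). simpl in E. subst.
      f_equal. apply proof_irrelevance.
    + intro x. exact (proj2_sig (j x)).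
Qed.

Lemma sm_sub P Q : (forall x, P x -> Q x) -> sm Q -> sm P.
Proof. intros H HQ [f [fi fP]]. apply HQ. exists f. split; auto. Qed.

Lemma hotel : exists sh : L -> L, inj sh /\ forall y, sh y <> k 0.
Proof.
  exists (fun y => match excluded_middle_informative (exists n, y = k n) with
          | left H => k (S (proj1_sig (constructive_indefinite_description _ H)))
          | right _ => y end).
  split.
  - intros y z.
    destruct (excluded_middle_informative (exists n, y = k n)) as [Hy|Hy];
    destruct (excluded_middle_informative (exists n, z = k n)) as [Hz|Hz].
    + destruct (constructive_indefinite_description _ Hy) as [n Hn].
      destruct (constructive_indefinite_description _ Hz) as [m Hm]. simpl.
      intro E. apply kinj in E. injection E; intro; subst; auto.
    + destruct (constructive_indefinite_description _ Hy) as [n Hn]. simpl.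
      intro E. exfalso; apply Hz; exists (S n); auto.
    + destruct (constructive_indefinite_description _ Hz) as [n Hn]. simpl.
      intro E. exfalso; apply Hy; exists (S n); auto.
    + auto.
  - intro y. destruct (excluded_middle_informative (exists n, y = k n)) as [Hy|Hy].
    + destruct (constructive_indefinite_description _ Hy) as [n Hn]. simpl.
      intro E. apply kinj in E. discriminate.
    + intro E. apply Hy. exists 0. auto.
Qed.

Lemma sm_add P a : sm P -> sm (fun x => P x \/ x = a).
Proof.
  intros HP [f [fi fP]]. apply HP. destruct hotel as [sh [shi shn]].
  exists (fun y => if excluded_middle_informative (f (sh y) = a) then f (k 0) else f (sh y)).
  split.
  - intros y z.
    destruct (excluded_middle_informative (f (sh y) = a)) as [e1|n1];
    destruct (excluded_middle_informative (f (sh z) = a)) as [e2|n2]; intro E.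
    + apply shi, fi. congruence.
    + apply fi in E. exfalso; apply (shn z); auto.
    + apply fi in E. exfalso; apply (shn y); auto.
    + apply shi, fi. auto.
  - intro y. destruct (excluded_middle_informative (f (sh y) = a)) as [e|n].
    + destruct (fP (k 0)) as [p|q]; auto. exfalso. rewrite <- e in q.
      apply fi in q. apply (shn y); auto.
    + destruct (fP (sh y)); [auto | contradiction].
Qed.

Lemma seg_sm a : sm (fun y => R y a).
Proof.
  destruct Hc as [_ [_ [_ [_ seg]]]]. apply small_sm. unfold small.
  exact (proj2 (seg a)).
Qed.

Lemma seg'_sm a : sm (fun y => R y a \/ y = a).
Proof. apply sm_add, seg_sm. Qed.

Lemma empty_sm : sm (fun _ => False).
Proof. intros [f [_ fP]]. exact (fP (k 0)). Qed.

Lemma union_sm (A : L -> Prop) (X : L -> L -> Prop) : sm A ->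
  (forall a, A a -> sm (X a)) -> sm (fun y => exists a, A a /\ X a y).
Proof.
  intros HA HX [j [ji jU]].
  destruct (Hpow A (proj2 (small_sm A) HA)) as [e ei].
  pose (d := k 0).
  pose (F := fun y => epsilon (inhabits (fun _ : {a|A a} => d)) (fun φ => e φ = y)).
  pose (I := fun (a : {a | A a}) z => exists y, X (proj1_sig a) (j y) /\ F y a = z).
  assert (HI : forall a : {a|A a}, exists z, ~ I a z).
  { intro a. apply NNPP; intro N. apply (HX (proj1_sig a) (proj2_sig a)).
    assert (H : forall z, I a z) by (intro z; apply NNPP; intro; apply N; eauto).
    exists (fun z => j (epsilon (inhabits d) (fun y => X (proj1_sig a) (j y) /\ F y a = z))).
    split.
    - intros z1 z2 E. apply ji in E.
      destruct (epsilon_spec (inhabits d) _ (H z1)) as [_ E1].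
      destruct (epsilon_spec (inhabits d) _ (H z2)) as [_ E2].
      rewrite E in E1. congruence.
    - intro z. exact (proj1 (epsilon_spec (inhabits d) _ (H z))). }
  pose (g := fun a : {a|A a} => epsilon (inhabits d) (fun z => ~ I a z)).
  destruct (jU (e g)) as [a [Aa Xa]].
  pose (a' := exist A a Aa).
  assert (Fg : F (e g) = g).
  { apply ei. unfold F.
    apply (epsilon_spec (inhabits (fun _ : {a|A a} => d)) (fun φ => e φ = e g)).
    exists g; reflexivity. }
  apply (epsilon_spec (inhabits d) (fun z => ~ I a' z) (HI a')).
  exists (e g). split; auto. rewrite Fg. reflexivity.
Qed.

Lemma bounded (A : L -> Prop) : sm A -> exists b, forall a, A a -> R a b.
Proof.
  intro HA. destruct Hc as [_ [_ [tri _]]]. apply NNPP; intro N.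
  apply (union_sm A (fun a y => R y a \/ y = a) HA (fun a _ => seg'_sm a)).
  exists (fun x => x). split; [intros x y E; exact E|]. intro b.
  apply NNPP; intro N2. apply N. exists b. intros a Aa.
  destruct (tri a b) as [H|[H|H]]; auto; exfalso; apply N2; exists a; split; auto.
Qed.

End H.

Theorem mainTheorem10
  (L : Type) (R : L -> L -> Prop)
  (Hcard : is_cardinal_order L R)
  (Hinf : card_le nat L)
  (* lambda^{<lambda} = lambda : lambda^mu <= lambda for every mu < lambda *)
  (Hpow : forall P : L -> Prop, small L P -> card_le ({x : L | P x} -> L) L)
  (Bf Cf : (L -> Prop) -> Prop)
  (HBlarge : forall B, Bf B -> large L B)
  (HClarge : forall C, Cf C -> large L C)
  (HCsize : card_le {C : L -> Prop | Cf C} L)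
  (* |Bf| < b_lambda : |Bf| is below the size of every unbounded family *)
  (HBsize : forall U : (L -> L) -> Prop, unbounded L R U ->
              card_lt {B : L -> Prop | Bf B} {f : L -> L | U f})
  (Hperp : forall B C, Bf B -> Cf C -> small L (fun x => B x /\ C x)) :
  separable L Bf Cf.
Proof.
  destruct Hinf as [k kinj].
  pose proof Hcard as [irr [trans [tri _]]].
  destruct HCsize as [e einj].
  pose (d := k 0).
  pose (D := fun ξ x => exists c : {C | Cf C}, e c = ξ /\ proj1_sig c x).
  assert (XB : forall B, Bf B -> forall ξ, sm L (fun x => B x /\ D ξ x)).
  { intros B HB ξ. destruct (classic (exists c, e c = ξ)) as [[c Hc]|N].
    - apply sm_sub with (Q := fun x => B x /\ proj1_sig c x).
      + intros x [Bx [c' [Hc' Cx]]]. split; auto.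
        assert (c' = c) by (apply einj; congruence). subst; auto.
      + apply small_sm. apply Hperp; auto. exact (proj2_sig c).
    - apply sm_sub with (Q := fun _ => False).
      + intros x [_ [c' [Hc' _]]]; apply N; eauto.
      + apply (empty_sm L k). }
  pose (G := fun (B : L -> Prop) α => epsilon (inhabits d)
     (fun b => forall x, (exists ξ, (R ξ α \/ ξ = α) /\ (B x /\ D ξ x)) -> R x b)).
  assert (GB : forall B, Bf B -> forall α x ξ, (R ξ α \/ ξ = α) -> B x -> D ξ x -> R x (G B α)).
  { intros B HB α x ξ H1 H2 H3. unfold G.
    apply (epsilon_spec (inhabits d)
      (fun b => forall x, (exists ξ, (R ξ α \/ ξ = α) /\ (B x /\ D ξ x)) -> R x b)).
    - apply (bounded L R Hcard k kinj Hpow).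
      apply (union_sm L k Hpow).
      + apply (sm_add L k); auto. apply (seg_sm L R Hcard).
      + intros a _. apply XB; auto.
    - eauto. }
  pose (U := fun f => exists B, Bf B /\ f = G B).
  assert (Hh : exists h, forall f, U f -> le_star L R f h).
  { apply NNPP; intro N. destruct (HBsize U N) as [_ Hn]. apply Hn.
    pose (i := inhabits (fun _ : L => True)).
    exists (fun f : {f | U f} => exist Bf (epsilon i (fun B => Bf B /\ proj1_sig f = G B))
              (proj1 (epsilon_spec i _ (proj2_sig f)))).
    intros [f1 H1] [f2 H2] E. apply (f_equal (@proj1_sig _ _)) in E. simpl in E.
    destruct (epsilon_spec i _ H1) as [_ E1].
    destruct (epsilon_spec i _ H2) as [_ E2]. simpl in E1, E2.
    assert (f1 = f2) by congruence. subst. f_equal. apply proof_irrelevance. }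
  destruct Hh as [h Hh].
  exists (fun x => forall ξ, D ξ x -> R x (h ξ)). split.
  - intros B HB. unfold subset_star. apply small_sm.
    assert (T := Hh (G B) (ex_intro _ B (conj HB eq_refl))).
    destruct (bounded L R Hcard k kinj Hpow _ (proj1 (small_sm L _) T)) as [α0 H0].
    apply sm_sub with (Q := fun y => R y (G B α0)); [|apply (seg_sm L R Hcard)].
    intros x [Bx NS]. apply NNPP. intro Nx. apply NS. intros ξ Dξ.
    destruct (tri ξ α0) as [l|[eq|gt]].
    + exfalso; apply Nx; apply (GB B HB α0 x ξ); auto.
    + exfalso; apply Nx; apply (GB B HB α0 x ξ); auto.
    + assert (xg : R x (G B ξ)) by (apply (GB B HB ξ x ξ); auto).
      destruct (tri (h ξ) (G B ξ)) as [a|[b|c]].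
      * exfalso. apply (irr ξ). apply trans with α0; [apply H0; exact a | exact gt].
      * rewrite b. exact xg.
      * apply trans with (G B ξ); auto.
  - intros C HC. apply small_sm. pose (c := exist Cf C HC).
    apply sm_sub with (Q := fun x => R x (h (e c))); [|apply (seg_sm L R Hcard)].
    intros x [Cx Sx]. apply Sx. exists c. auto.
Qed.
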